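(* Let $i\in\mathbb{N}$ and $f\in\mathbb{R}^n\setminus\mathbb{Z}^n$. Then $\mathcal{L}_i^n$ is $f$-closed.
   Context: $\mathcal{C}^n$ is the family of all $n$-dimensional closed convex subsets of $\mathbb{R}^n$; $\mathcal{C}^n_f$ is the subfamily of sets containing $f$ in the interior, and for $\mathcal{B}\subseteq\mathcal{C}^n$, $\mathcal{B}_f=\mathcal{B}\cap\mathcal{C}^n_f$. A set $B$ is lattice-free if $B\in\mathcal{C}^n$ and $\operatorname{int}(B)\cap\mathbb{Z}^n=\emptyset$. $\mathcal{L}_i^n$ is the family of all lattice-free polyhedra in $\mathbb{R}^n$ with at most $i$ facets. For $B\in\mathcal{C}^n$ with $0\in\operatorname{int}(B)$, $\psi_B(r)=\inf\{\lambda>0:r\in\lambda B\}$. A family $\mathcal{B}\subseteq\mathcal{C}^n$ is $f$-closed if whenever $B_t\in\mathcal{B}_f$ ($t\in\mathbb{N}$), $C\in\mathcal{C}^n_f$ and $\psi_{B_t-f}\to\psi_{C-f}$ pointwise on $\mathbb{R}^n$, then $C\in\mathcal{B}_f$. *)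

(* Defs.v *)
From HB Require Import structures.
From mathcomp Require Import all_boot all_order all_algebra.
From mathcomp Require Import all_classical all_reals all_analysis.
Set Implicit Arguments. Unset Strict Implicit. Unset Printing Implicit Defensive.
Import Order.TTheory GRing.Theory Num.Theory.
Import numFieldNormedType.Exports.
Local Open Scope classical_set_scope.
Local Open Scope ring_scope.

Definition convex_set (R : realType) (n : nat) (B : set 'rV[R]_n) : Prop :=
  forall x y, B x -> B y -> forall t : R, 0 <= t -> t <= 1 ->
    B (t *: x + (1 - t) *: y).

(* C^n : n-dimensional closed convex subsets of R^n
   (for a convex set, n-dimensional = nonempty interior). *)
Definition Cn (R : realType) (n : nat) (B : set 'rV[R]_n) : Prop :=
  closed B /\ convex_set B /\ (B^° !=set0).

Definition Cnf (R : realType) (n : nat) (f : 'rV[R]_n) (B : set 'rV[R]_n) : Prop :=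
  Cn B /\ B^° f.

Definition is_lattice_point (R : realType) (n : nat) (x : 'rV[R]_n) : Prop :=
  forall j : 'I_n, x 0 j \is a Num.int.

Definition lattice_free (R : realType) (n : nat) (B : set 'rV[R]_n) : Prop :=
  Cn B /\ (forall z, B^° z -> ~ is_lattice_point z).

Definition dotv (R : realType) (n : nat) (a x : 'rV[R]_n) : R :=
  \sum_(j < n) a 0 j * x 0 j.

(* polyhedron with at most i facets: (for full-dimensional polyhedra)
   an intersection of at most i closed halfspaces *)
Definition polyhedron_at_most_facets (R : realType) (n i : nat)
    (P : set 'rV[R]_n) : Prop :=
  exists k : nat, (k <= i)%N /\
  exists (A : 'I_k -> 'rV[R]_n) (b : 'I_k -> R),
    (forall j, A j != 0) /\ P = [set x | forall j, dotv (A j) x <= b j].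

Definition Lin (R : realType) (n i : nat) (P : set 'rV[R]_n) : Prop :=
  lattice_free P /\ polyhedron_at_most_facets i P.

Definition translate (R : realType) (n : nat) (B : set 'rV[R]_n) (f : 'rV[R]_n)
  : set 'rV[R]_n := [set x - f | x in B].

Definition gauge (R : realType) (n : nat) (K : set 'rV[R]_n) (r : 'rV[R]_n) : R :=
  inf [set l : R | 0 < l /\ exists k, K k /\ r = l *: k].

Definition f_closed (R : realType) (n : nat) (Bf : set 'rV[R]_n -> Prop)
    (f : 'rV[R]_n) : Prop :=
  forall (Bt : nat -> set 'rV[R]_n) (C : set 'rV[R]_n),
    (forall t, Bf (Bt t) /\ Cnf f (Bt t)) ->
    Cnf f C ->
    (forall r, (fun t => gauge (translate (Bt t) f) r) @ \oo -->
               gauge (translate C f) r) ->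
    Bf C /\ Cnf f C.

(* Main.v *)
Require Import Defs.
From mathcomp Require Import all_boot all_order all_algebra.
From mathcomp Require Import all_classical all_reals all_analysis.
From mathcomp Require Import lra.
Set Implicit Arguments. Unset Strict Implicit. Unset Printing Implicit Defensive.
Import Order.TTheory GRing.Theory Num.Theory.
Import numFieldNormedType.Exports.
Local Open Scope classical_set_scope.
Local Open Scope ring_scope.

Section Aux.
Variable R : realType.
Variable n : nat.
Implicit Types u v x y : 'rV[R]_n.

Lemma dotvZl (c : R) u v : dotv (c *: u) v = c * dotv u v.
Proof. rewrite /dotv mulr_sumr; apply: eq_bigr => k _; by rewrite mxE mulrA. Qed.

Lemma dotvZr (c : R) u v : dotv u (c *: v) = c * dotv u v.
Proof. rewrite /dotv mulr_sumr; apply: eq_bigr => k _; by rewrite mxE mulrCA. Qed.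

Lemma dotvDr u x y : dotv u (x + y) = dotv u x + dotv u y.
Proof. rewrite /dotv -big_split; apply: eq_bigr => k _; by rewrite mxE mulrDr. Qed.

Lemma dotvNr u x : dotv u (- x) = - dotv u x.
Proof. rewrite /dotv -sumrN; apply: eq_bigr => k _; by rewrite mxE mulrN. Qed.

Lemma dotvBr u x y : dotv u (x - y) = dotv u x - dotv u y.
Proof. by rewrite dotvDr dotvNr. Qed.

Lemma dotv0l v : dotv 0 v = 0.
Proof. rewrite /dotv big1 // => k _; by rewrite mxE mul0r. Qed.

Lemma dotv_gt0 u : u != 0 -> 0 < dotv u u.
Proof.
move=> u0; rewrite /dotv.
have [k uk] : exists k, u 0 k != 0.
  apply/existsP; apply: contraNT u0 => /existsPn H; apply/eqP/rowP => k.
  by rewrite mxE; move: (H k); rewrite negbK => /eqP.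
rewrite (bigD1 k) //=; apply: ltr_pwDl; first by rewrite lt0r mulf_neq0 //= -expr2 sqr_ge0.
by apply: sumr_ge0 => j _; rewrite -expr2 sqr_ge0.
Qed.
End Aux.

Section Cvg.
Variable R : realType.

Lemma cvg_maxr {T : Type} (F : set_system T) {FF : Filter F} (f g : T -> R) a b :
  f @ F --> a -> g @ F --> b ->
  (fun x => Order.max (f x) (g x)) @ F --> Order.max a b.
Proof.
move=> fa gb.
under eq_fun => ? do rewrite maxr_absE.
rewrite maxr_absE.
apply: cvgM; [|exact: cvg_cst]; apply: cvgD; first exact: cvgD.
by apply: cvg_norm; apply: cvgB.
Qed.

Lemma cvg_bigmax {T : Type} (F : set_system T) {FF : Filter F} (I : Type) (s : seq I)
   (g : T -> I -> R) (l : I -> R) :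
  (forall j, g ^~ j @ F --> l j) ->
  (fun x => \big[Order.max/0]_(j <- s) g x j) @ F --> \big[Order.max/0]_(j <- s) l j.
Proof.
move=> H; elim: s => [|j s IH].
  under eq_fun => ? do rewrite big_nil.
  by rewrite big_nil; exact: cvg_cst.
under eq_fun => ? do rewrite big_cons.
by rewrite big_cons; apply: cvg_maxr.
Qed.

Lemma cvg_dotv (n : nat) {T : Type} (F : set_system T) {FF : Filter F}
   (u w : T -> 'rV[R]_n) p q :
  u @ F --> p -> w @ F --> q -> (fun x => dotv (u x) (w x)) @ F --> dotv p q.
Proof.
move=> up wq; rewrite /dotv.
suff H : forall s : seq 'I_n, (fun x => \sum_(k <- s) u x 0 k * w x 0 k) @ F
    --> \sum_(k <- s) p 0 k * q 0 k by exact: H.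
elim => [|k s IH].
  under eq_fun => ? do rewrite big_nil.
  by rewrite big_nil; exact: cvg_cst.
under eq_fun => ? do rewrite big_cons.
rewrite big_cons; apply: cvgD => //; apply: cvgM.
  exact: (@continuous_cvg _ _ _ F _ u (fun M : 'rV[R]_n => M 0 k) p
     (@coord_continuous R 1 n 0 k p) up).
exact: (@continuous_cvg _ _ _ F _ w (fun M : 'rV[R]_n => M 0 k) q
     (@coord_continuous R 1 n 0 k q) wq).
Qed.

End Cvg.

Definition gm (R : realType) (n i : nat) (a : 'I_i -> 'rV[R]_n) (r : 'rV[R]_n) : R :=
  \big[Order.max/0]_(j < i) dotv (a j) r.

Section Gauge.
Variables (R : realType) (n i : nat).
Implicit Types (a : 'I_i -> 'rV[R]_n) (r : 'rV[R]_n).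

Lemma gm_ge0 a r : 0 <= gm a r.
Proof. exact: bigmax_ge_id. Qed.

Lemma le_gm a r j : dotv (a j) r <= gm a r.
Proof. exact: le_bigmax. Qed.

Lemma gm_le a r m : 0 <= m -> (forall j, dotv (a j) r <= m) -> gm a r <= m.
Proof. by move=> m0 H; apply: bigmax_le. Qed.

Lemma gm_lt a r m : 0 < m -> (forall j, dotv (a j) r < m) -> gm a r < m.
Proof. by move=> m0 H; apply: bigmax_lt. Qed.

Lemma gauge_poly a r :
  gauge [set x | forall j, dotv (a j) x <= 1] r = gm a r.
Proof.
rewrite /gauge; set S := [set l : R | _].
have HS : forall l, S l <-> 0 < l /\ gm a r <= l.
  move=> l; split.
    move=> [l0 [k [Kk ->]]]; split => //.
    apply: gm_le; first exact: ltW.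
    move=> j; rewrite dotvZr -[X in _ <= X]mulr1.
    by rewrite ler_pM2l.
  move=> [l0 gml]; split => //; exists (l^-1 *: r); split.
    move=> j; rewrite dotvZr mulrC -ler_pdivlMr ?invr_gt0 // invrK mul1r.
    exact: le_trans (le_gm a r j) gml.
  by rewrite scalerA mulfV ?scale1r // gt_eqF.
have lbS : lbound S 0 by move=> l /HS [/ltW].
apply/le_anti/andP; split.
  apply/ler_addgt0Pr => e e0.
  have Se : S (gm a r + e).
    apply/HS; split; last by rewrite lerDl ltW.
    by apply: lt_le_trans (e0) _; rewrite lerDr gm_ge0.
  by apply: ge_inf => //; exists 0.
apply: lb_le_inf.
  exists (gm a r + 1); apply/HS; split; last by rewrite lerDl.
  by apply: lt_le_trans ltr01 _; rewrite lerDr gm_ge0.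
by move=> l /HS [].
Qed.

End Gauge.

Section Interior.
Variables (R : realType) (n : nat).

Lemma interior_dir (P : set 'rV[R]_n) z v : P^° z ->
  exists2 c : R, 0 < c & P (z + c *: v).
Proof.
move=> Pz.
have cv : (fun m : nat => z + (harmonic m : R) *: v) @ \oo --> z.
  rewrite -[X in _ --> X]addr0; apply: cvgD; first exact: cvg_cst.
  rewrite -(scale0r v); apply: cvgZ; [exact: cvg_harmonic | exact: cvg_cst].
have H : \forall m \near \oo, P (z + (harmonic m : R) *: v) := cv P Pz.
have [m Pm] := filter_ex H.
by exists (harmonic m : R) => //; rewrite /harmonic /= invr_gt0 ltr0Sn.
Qed.

End Interior.

Section Normalize.
Variables (R : realType) (n i : nat).

Lemma translate_eq (P : set 'rV[R]_n) f : translate P f = [set r | P (r + f)].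
Proof.
apply/seteqP; split => r /=.
  by move=> [x Px <-]; rewrite subrK.
by move=> Pr; exists (r + f) => //; rewrite addrK.
Qed.

Lemma normalize_ineq (A : 'rV[R]_n) (b : R) f x : dotv A f < b ->
  (dotv ((b - dotv A f)^-1 *: A) (x - f) <= 1) = (dotv A x <= b).
Proof.
move=> Hb; rewrite dotvZl dotvBr mulrC ler_pdivrMr ?subr_gt0 // mul1r.
by rewrite lerD2r.
Qed.

Lemma poly_normalize (P : set 'rV[R]_n) f : polyhedron_at_most_facets i P -> P^° f ->
  exists a : 'I_i -> 'rV[R]_n, P = [set x | forall j, dotv (a j) (x - f) <= 1].
Proof.
move=> [k [ki [A [b [A0 PE]]]]] fi.
have pos : forall j, dotv (A j) f < b j.
  move=> j; have [c c0] := interior_dir (A j) fi.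
  rewrite PE => /(_ j); rewrite dotvDr dotvZr => H.
  apply: lt_le_trans H; rewrite ltrDl; apply: mulr_gt0 => //; exact: dotv_gt0.
pose c j := (b j - dotv (A j) f)^-1 *: A j.
pose s := [seq c j | j <- enum 'I_k].
have ss : size s = k by rewrite size_map size_enum_ord.
exists (fun j : 'I_i => nth 0 s j).
rewrite PE; apply/seteqP; split => x /= Hx j.
- case: (ltnP j (size s)) => js; last by rewrite nth_default // dotv0l ler01.
  have : nth 0 s j \in s by apply: mem_nth.
  by move=> /mapP [j' _ ->]; rewrite /c normalize_ineq.
- have := Hx (widen_ord ki j); rewrite /= (nth_map j) ?size_enum_ord //.
  by rewrite nth_ord_enum /c normalize_ineq.
Qed.

End Normalize.

Section GaugeC.
Variables (R : realType) (n : nat).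

Lemma interior_dirs (P : set 'rV[R]_n) (I : finType) z (v : I -> 'rV[R]_n) : P^° z ->
  exists2 c : R, 0 < c & forall k, P (z + c *: v k).
Proof.
move=> Pz.
have H : \forall m \near \oo, forall k, P (z + (harmonic m : R) *: v k).
  apply: filter_forall => k.
  have cv : (fun m : nat => z + (harmonic m : R) *: v k) @ \oo --> z.
    rewrite -[X in _ --> X]addr0; apply: cvgD; first exact: cvg_cst.
    rewrite -(scale0r (v k)); apply: cvgZ; [exact: cvg_harmonic | exact: cvg_cst].
  exact: cv P Pz.
have [m Pm] := filter_ex H.
by exists (harmonic m : R) => //; rewrite /harmonic /= invr_gt0 ltr0Sn.
Qed.

Lemma gauge_le1 (K : set 'rV[R]_n) r : K r -> gauge K r <= 1.
Proof.
move=> Kr; apply: ge_inf.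
  by exists 0 => l [/ltW].
by split => //; exists r; rewrite scale1r.
Qed.

Lemma gauge_le1_mem (C : set 'rV[R]_n) f x : closed C -> Defs.convex_set C -> C^° f ->
  gauge (translate C f) (x - f) <= 1 -> C x.
Proof.
move=> Ccl Ccv Cf g1.
have fC : C f by apply: interior_subset.
have Sne : [set l : R | 0 < l /\ exists k, translate C f k /\ x - f = l *: k] !=set0.
  have [c c0 Hc] := interior_dir (x - f) Cf.
  exists c^-1; split; first by rewrite invr_gt0.
  exists (c *: (x - f)); split; last by rewrite scalerA mulVf ?scale1r // gt_eqF.
  by rewrite translate_eq /= addrC.
have key : forall t : R, 0 <= t -> t < 1 -> C (f + t *: (x - f)).
  move=> t t0 t1; have [->|tn0] := eqVneq t 0; first by rewrite scale0r addr0.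
  have tp : 0 < t by rewrite lt_neqAle eq_sym tn0.
  have : gauge (translate C f) (x - f) < t^-1.
    by apply: le_lt_trans g1 _; rewrite invf_gt1.
  move=> /(inf_lt Sne) [l [l0 [k [Ck ->]]] lt].
  move: Ck; rewrite translate_eq /= => Ck.
  have tl0 : 0 <= t * l by rewrite mulr_ge0 // ltW.
  have tl1 : t * l <= 1 by rewrite -(mulfV tn0) ler_pM2l // ltW.
  have := Ccv _ _ Ck fC _ tl0 tl1.
  congr C; rewrite scalerA scalerDr scalerBl scale1r.
  by rewrite addrCA addrK addrC.
apply: (@closed_cvg _ _ \oo _ (fun m : nat => f + (1 - (harmonic m : R)) *: (x - f))) => //.
  apply: filterE => m; apply: key.
    rewrite subr_ge0 /harmonic /= invf_le1 ?ltr0Sn //.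
    by rewrite -[1]/(1%:R) ler_nat.
  by rewrite ltrBlDr ltrDl /harmonic /= invr_gt0 ltr0Sn.
suff H : (fun m : nat => f + (1 - (harmonic m : R)) *: (x - f)) @ \oo --> f + (1 - 0) *: (x - f).
  by rewrite subr0 scale1r [f + (x - f)]addrC subrK in H.
apply: cvgD; first exact: cvg_cst.
apply: cvgZ; last exact: cvg_cst.
apply: cvgB; [exact: cvg_cst | exact: cvg_harmonic].
Qed.

End GaugeC.

Lemma ultra_compact_cvg {T : Type} (U : set_system T) (V : topologicalType)
  (u : T -> V) (A : set V) :
  UltraFilter U -> compact A -> U (u @^-1` A) -> exists p : V, u @ U --> p.
Proof.
move=> UU Acp UA.
have [p [Ap clp]] := Acp (u @ U) _ UA.
exists p => N Np.
case: (in_ultra_setVsetC (u @^-1` N) UU) => // Hc.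
have [x [Hx1 Hx2]] := clp (~` N) N Hc Np.
by exfalso; apply: Hx1.
Qed.

Lemma dotv_delta (R : realType) (n : nat) (u : 'rV[R]_n) k :
  dotv u (delta_mx 0 k) = u 0 k.
Proof.
rewrite /dotv (bigD1 k) //= mxE !eqxx mulr1 big1 ?addr0 // => j jk.
by rewrite mxE (negbTE jk) andbF mulr0.
Qed.

Unset Implicit Arguments.
Unset Strict Implicit.

Theorem proposition3p7 (R : realType) (n i : nat) (f : 'rV[R]_n) :
  ~ is_lattice_point f -> f_closed (@Lin R n i) f.
Proof.
move=> nf Bt C HB HC Hg.
split; last exact: HC.
have Hex : forall t, exists a : 'I_i -> 'rV[R]_n,
    Bt t = [set x | forall j, dotv (a j) (x - f) <= 1].
  move=> t; have [[_ Hp] [_ fi]] := HB t.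
  exact: poly_normalize Hp fi.
have [a Ha] := choice Hex.
have gB : forall t r, gauge (translate (Bt t) f) r = gm (a t) r.
  move=> t r; rewrite -gauge_poly translate_eq Ha; congr gauge.
  by apply/seteqP; split => x /=; rewrite addrK.
set K := translate C f.
have Hg' : forall r, (fun t => gm (a t) r) @ \oo --> gauge K r.
  move=> r; have E : (fun t => gauge (translate (Bt t) f) r) = (fun t => gm (a t) r).
    by apply: funext => t; exact: gB.
  by rewrite -E; exact: Hg.
have [[Ccl [Ccv _]] fint] := HC.
pose v (ks : 'I_n * bool) : 'rV[R]_n := (if ks.2 then 1 else -1) *: delta_mx 0 ks.1.
have [c c0 Hc] := interior_dirs v fint.
have ev : \forall t \near \oo, forall ks, gm (a t) (c *: v ks) < 2.
  apply: filter_forall => ks; apply: (@cvgr_lt R nat \oo _ _ _ (Hg' (c *: v ks)) 2).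
  apply: le_lt_trans (gauge_le1 _) _; last by rewrite ltr1n.
  by rewrite /K translate_eq /= addrC.
have box : \forall t \near \oo, forall j k, - (2 / c) <= a t j 0 k <= 2 / c.
  apply: filterS ev => t H j k.
  have H1 := le_lt_trans (le_gm (a t) _ j) (H (k, true)).
  have H2 := le_lt_trans (le_gm (a t) _ j) (H (k, false)).
  rewrite /v /= !dotvZr dotv_delta in H1 H2.
  rewrite mul1r in H1; rewrite mulN1r in H2.
  apply/andP; split.
    by rewrite lerNl ler_pdivlMr // mulrC ltW.
  by rewrite ler_pdivlMr // mulrC ltW.
have [U [UU sU]] := @ultraFilterLemma nat \oo _.
have Hexp : forall j, exists q : 'rV[R]_n, (fun t => a t j) @ U --> q.
  move=> j.
  apply: (@ultra_compact_cvg _ U _ _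
    [set w : 'rV[R]_n | forall k, `[-(2/c), 2/c]%classic (w ord0 k)] UU).
    exact: (@rV_compact R n (fun=> `[-(2/c), 2/c]%classic)
      (fun=> @segment_compact R (-(2/c)) (2/c))).
  apply: sU; apply: filterS box => t H k /=; rewrite in_itv /=; exact: H.
have [p Hp] := choice Hexp.
have gauge_eq : forall r, gauge K r = gm p r.
  move=> r.
  have c1 : (fun t => gm (a t) r) @ U --> gm p r.
    rewrite /gm; apply: cvg_bigmax => j; apply: cvg_dotv; [exact: Hp | exact: cvg_cst].
  have c2 : (fun t => gm (a t) r) @ U --> gauge K r.
    by move=> N /(Hg' r); apply: sU.
  exact: (cvg_unique _ c2 c1).
have CE : C = [set x | forall j, dotv (p j) (x - f) <= 1].
  apply/seteqP; split => x /=.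
    move=> Cx j; apply: le_trans (le_gm p _ j) _; rewrite -gauge_eq; apply: gauge_le1.
    by rewrite /K translate_eq /= subrK.
  move=> Hx; apply: (gauge_le1_mem Ccl Ccv fint).
  by rewrite -/K gauge_eq; apply: gm_le.
split.
- split; first exact HC.1.
  move=> z zint zlat.
  have [s s0 Hs] := interior_dir (z - f) zint.
  have lt1 : gm p (z - f) < 1.
    apply: gm_lt => // j.
    move: Hs; rewrite {1}CE => /(_ j).
    have E : z + s *: (z - f) - f = (1 + s) *: (z - f) by rewrite scalerDl scale1r addrAC.
    rewrite E dotvZr => H; nra.
  have ev1 : \forall t \near \oo, gm (a t) (z - f) < 1.
    by apply: (@cvgr_lt R nat \oo _ _ _ (Hg' (z - f)) 1); rewrite gauge_eq.
  have [t Ht] := filter_ex ev1.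
  have [[[_ LF] _] _] := HB t.
  apply: (LF z) => //.
  have cz : (fun y => gm (a t) (y - f)) @ z --> gm (a t) (z - f).
    rewrite /gm; apply: (@cvg_bigmax R _ (nbhs z) (nbhs_filter z)) => j.
    apply: (@cvg_dotv R n _ (nbhs z) (nbhs_filter z)); first exact: cvg_cst.
    apply: cvgB; [exact: cvg_id | exact: cvg_cst].
  have nz : \forall y \near z, gm (a t) (y - f) < 1 := @cvgr_lt R _ _ (nbhs_filter z) _ _ cz 1 Ht.
  rewrite Ha; move: nz; apply: filterS => y Hy j.
  exact: le_trans (le_gm _ _ j) (ltW Hy).
- pose sv := [seq w <- map p (enum 'I_i) | w != 0].
  exists (size sv); split.
    by rewrite size_filter (leq_trans (count_size _ _)) // size_map size_enum_ord.
  exists (fun j => nth 0 sv j), (fun j => 1 + dotv (nth 0 sv j) f); split.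
    move=> j; have : nth 0 sv j \in sv by apply: mem_nth.
    by rewrite mem_filter => /andP [].
  rewrite CE; apply/seteqP; split => x /= Hx j.
    rewrite -lerBlDr -dotvBr.
    have : nth 0 sv j \in sv by apply: mem_nth.
    by rewrite mem_filter => /andP [_ /mapP [j' _ ->]].
  have [pj0|pj0] := eqVneq (p j) 0; first by rewrite pj0 dotv0l ler01.
  have pin : p j \in sv by rewrite mem_filter pj0 /= map_f // mem_enum.
  have im : (index (p j) sv < size sv)%N by rewrite index_mem.
  have := Hx (Ordinal im); rewrite /= nth_index //.
  by rewrite dotvBr lerBlDr.
Qed.
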